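(* Let $y\in\mathbb{R}^n$, $F\in\mathbb{R}^n$, $Z\in\mathbb{R}^{n\times m}$, and let $\theta=(\theta_1,\dots,\theta_q)^T$ with $\theta_1=\sigma^2>0$, where $\Sigma=\Sigma(\theta_2,\dots,\theta_q)\in\mathbb{R}^{m\times m}$ is a covariance matrix depending differentiably on $\theta_2,\dots,\theta_q$ (and not on $\sigma^2$). Put $C=Z\Sigma Z^T+\sigma^2I_n$. For each $i=1,\dots,n$ let $N(i)\subseteq\{1,\dots,i-1\}$ be a conditioning set, and define $$A_i=\left(Z\Sigma Z^T\right)_{i,N(i)}\left(C_{N(i)}\right)^{-1}\in\mathbb{R}^{1\times|N(i)|},\qquad D_i=C_{i,i}-A_i\left(Z\Sigma Z^T\right)_{N(i),i}.$$ Let $B$ be the $n\times n$ lower triangular matrix with ones on the diagonal, $(B)_{i,N(i)}=-A_i$, and zeros elsewhere, and let $D=\mathrm{diag}(D_1,\dots,D_n)$. Let $$\tilde L(y,F,\theta)=\frac12(y-F)^TB^TD^{-1}B(y-F)+\frac12\sum_{i=1}^n\log D_i+\frac n2\log(2\pi)$$ be the negative log-likelihood of $y\sim\mathcal{N}(F,B^{-1}DB^{-T})$. Then for $1\le k\le q$, $$\frac{\partial \tilde L(y,F,\theta)}{\partial\theta_k}=\frac12\left(2u_k^Tu-u^T\frac{\partial D}{\partial\theta_k}u\right)+\frac12\sum_{i=1}^n\frac1{D_i}\frac{\partial D_i}{\partial\theta_k},$$ where $u=D^{-1}B(y-F)$, $u_k=\frac{\partial B}{\partial\theta_k}(y-F)$,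 and $\frac{\partial B}{\partial\theta_k}$ is lower triangular and $\frac{\partial D}{\partial\theta_k}$ diagonal, with non-zero entries given, for $1<k\le q$, by $$\left(\frac{\partial B}{\partial\theta_k}\right)_{i,N(i)}=-\frac{\partial A_i}{\partial\theta_k}=-\left(Z\frac{\partial\Sigma}{\partial\theta_k}Z^T\right)_{i,N(i)}\left(C_{N(i)}\right)^{-1}+\left(Z\Sigma Z^T\right)_{i,N(i)}\left(C_{N(i)}\right)^{-1}\left(Z\frac{\partial\Sigma}{\partial\theta_k}Z^T\right)_{N(i)}\left(C_{N(i)}\right)^{-1},$$ $$\frac{\partial D_i}{\partial\theta_k}=\left(Z\frac{\partial\Sigma}{\partial\theta_k}Z^T\right)_{i,i}-\frac{\partial A_i}{\partial\theta_k}\left(Z\Sigma Z^T\right)_{N(i),i}-A_i\left(Z\frac{\partial\Sigma}{\partial\theta_k}Z^T\right)_{N(i),i},$$ and, for $k=1$ (i.e. $\theta_1=\sigma^2$), by $$\left(\frac{\partial B}{\partial\sigma^2}\right)_{i,N(i)}=\left(Z\Sigma Z^T\right)_{i,N(i)}\left(C_{N(i)}\right)^{-2},\qquad \frac{\partial D_i}{\partial\sigma^2}=1-\frac{\partial A_i}{\partial\sigma^2}\left(Z\Sigma Z^T\right)_{N(i),i}.$$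
   Context: For a matrix $M$ and index set $N(i)$, $M_{i,N(i)}$ denotes the submatrix with row $i$ and columns $N(i)$, $M_{N(i),i}$ the submatrix with rows $N(i)$ and column $i$, and $M_{N(i)}$ the submatrix with rows and columns $N(i)$. The matrices $B,D$ define the Vecchia approximation $y\approx\mathcal{N}(F,B^{-1}DB^{-T})$ of the Gaussian model $y=F+Zb+\epsilon$, $b\sim\mathcal{N}(0,\Sigma)$, $\epsilon\sim\mathcal{N}(0,\sigma^2I_n)$, obtained by replacing $p(y_i\mid y_1,\dots,y_{i-1})$ by $p(y_i\mid y_{N(i)})$ (in the paper $N(i)$ are nearest-neighbor sets, e.g. the indices of the nearest neighbors of location $s_i$ among $s_1,\dots,s_{i-1}$). Derivatives with respect to $\sigma^2$ are taken with $\Sigma$ held fixed. *)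

(* Defs.v *)
From HB Require Import structures.
From mathcomp Require Import all_boot all_order all_algebra.
From mathcomp Require Import all_classical all_reals all_analysis.
Set Implicit Arguments. Unset Strict Implicit. Unset Printing Implicit Defensive.
Import Order.TTheory GRing.Theory Num.Theory.
Import numFieldNormedType.Exports.
Local Open Scope ring_scope.

Section Vecchia.
Variables (R : realType) (n m : nat).

Definition covariance_mx (S : 'M[R]_m) : Prop :=
  S^T = S /\ forall v : 'cV[R]_m, 0 <= (v^T *m S *m v) 0 0.

Definition conditioning_sets (N : 'I_n -> {set 'I_n}) : Prop :=
  forall i j : 'I_n, j \in N i -> (j < i)%N.

Variable N : 'I_n -> {set 'I_n}.

(* enumeration (in increasing order) of N(i) *)
Definition nb (i : 'I_n) : 'I_#|N i| -> 'I_n := fun j => enum_val j.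

Definition row_nb (M : 'M[R]_n) i : 'rV[R]_#|N i| :=
  \row_j M i (nb j).
Definition col_nb (M : 'M[R]_n) i : 'cV[R]_#|N i| :=
  \col_j M (nb j) i.
Definition sub_nb (M : 'M[R]_n) i : 'M[R]_#|N i| :=
  \matrix_(j, l) M (nb j) (nb l).

(* n x n lower triangular matrix with 1 on the diagonal whose (i,N(i))
   block is -a i, and zero elsewhere *)
Definition Bmat (a : forall i : 'I_n, 'rV[R]_#|N i|) : 'M[R]_n :=
  \matrix_(r, c) ((r == c)%:R - \sum_(j < #|N r|) (nb j == c)%:R * a r 0 j).

(* matrix whose (i,N(i)) block is b i, zero elsewhere (used for dB) *)
Definition blockmat (b : forall i : 'I_n, 'rV[R]_#|N i|) : 'M[R]_n :=
  \matrix_(r, c) (\sum_(j < #|N r|) (nb j == c)%:R * b r 0 j).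

Variables (Z : 'M[R]_(n, m)).

Definition Kmat (S : 'M[R]_m) : 'M[R]_n := Z *m S *m Z^T.
Definition Cmat (s2 : R) (S : 'M[R]_m) : 'M[R]_n := Kmat S + s2%:M.

Definition Avec (s2 : R) (S : 'M[R]_m) i : 'rV[R]_#|N i| :=
  row_nb (Kmat S) i *m invmx (sub_nb (Cmat s2 S) i).
Definition Dval (s2 : R) (S : 'M[R]_m) i : R :=
  Cmat s2 S i i - (Avec s2 S i *m col_nb (Kmat S) i) 0 0.
Definition Bvec (s2 : R) (S : 'M[R]_m) : 'M[R]_n := Bmat (Avec s2 S).
Definition Dvec (s2 : R) (S : 'M[R]_m) : 'M[R]_n :=
  diag_mx (\row_i Dval s2 S i).

Definition Ltilde (y F : 'cV[R]_n) (s2 : R) (S : 'M[R]_m) : R :=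
  2^-1 * ((y - F)^T *m (Bvec s2 S)^T *m invmx (Dvec s2 S) *m Bvec s2 S
          *m (y - F)) 0 0
  + 2^-1 * \sum_i ln (Dval s2 S i)
  + n%:R / 2 * ln (2 * pi).

(* derivatives for theta_k with k > 1, given dS = dSigma/dtheta_k *)
Definition dAvec (s2 : R) (S dS : 'M[R]_m) i : 'rV[R]_#|N i| :=
  row_nb (Kmat dS) i *m invmx (sub_nb (Cmat s2 S) i)
  - row_nb (Kmat S) i *m invmx (sub_nb (Cmat s2 S) i)
      *m sub_nb (Kmat dS) i *m invmx (sub_nb (Cmat s2 S) i).
Definition dDval (s2 : R) (S dS : 'M[R]_m) i : R :=
  Kmat dS i i - (dAvec s2 S dS i *m col_nb (Kmat S) i) 0 0
  - (Avec s2 S i *m col_nb (Kmat dS) i) 0 0.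

Definition dBrow_s2 (s2 : R) (S : 'M[R]_m) i : 'rV[R]_#|N i| :=
  row_nb (Kmat S) i *m (invmx (sub_nb (Cmat s2 S) i)) ^+ 2.
Definition dAvec_s2 (s2 : R) (S : 'M[R]_m) i : 'rV[R]_#|N i| :=
  - dBrow_s2 s2 S i.
Definition dDval_s2 (s2 : R) (S : 'M[R]_m) i : R :=
  1 - (dAvec_s2 s2 S i *m col_nb (Kmat S) i) 0 0.

Definition grad_rhs (y F : 'cV[R]_n) (s2 : R) (S : 'M[R]_m)
  (dB : 'M[R]_n) (dDv : 'I_n -> R) : R :=
  let u := invmx (Dvec s2 S) *m Bvec s2 S *m (y - F) in
  let uk := dB *m (y - F) in
  let dD := diag_mx (\row_i dDv i) in
  2^-1 * (2 * (uk^T *m u) 0 0 - (u^T *m dD *m u) 0 0)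
  + 2^-1 * \sum_i (Dval s2 S i)^-1 * dDv i.

End Vecchia.

(* Main.v *)
Require Import Defs.
From HB Require Import structures.
From mathcomp Require Import all_boot all_order all_algebra.
From mathcomp Require Import all_classical all_reals all_analysis.
Import Order.TTheory GRing.Theory Num.Theory.
Import numFieldNormedType.Exports.
Local Open Scope ring_scope.

Set Implicit Arguments. Unset Strict Implicit. Unset Printing Implicit Defensive.

Section Der.
Variable R : realType.

Notation sder f d := (is_derive (0:R) (1:R) f d).

Lemma sder_ext (f g : R -> R) d : f = g -> sder g d -> sder f d.
Proof. by move=> ->. Qed.

Lemma sder_cst (c : R) : sder (fun _ => c) 0.
Proof. exact: is_derive_cst. Qed.

Lemma sder_add (f g : R -> R) df dg : sder f df -> sder g dg ->
  sder (fun h => f h + g h) (df + dg).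
Proof. move=> Hf Hg; exact: (is_deriveD Hf Hg). Qed.

Lemma sder_opp (f : R -> R) df : sder f df -> sder (fun h => - f h) (- df).
Proof. move=> Hf; exact: (is_deriveN Hf). Qed.

Lemma sder_sub (f g : R -> R) df dg : sder f df -> sder g dg ->
  sder (fun h => f h - g h) (df - dg).
Proof. move=> Hf Hg; exact: (is_deriveB Hf Hg). Qed.

Lemma sder_mul (f g : R -> R) df dg : sder f df -> sder g dg ->
  sder (fun h => f h * g h) (f 0 * dg + df * g 0).
Proof.
move=> Hf Hg; have := is_deriveM Hf Hg.
by rewrite /GRing.scale /= [df * _]mulrC.
Qed.

Lemma sder_sum (I : Type) (r : seq I) (P : pred I) (f : I -> R -> R) (f' : I -> R) :
  (forall i, P i -> sder (f i) (f' i)) ->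
  sder (fun h => \sum_(i <- r | P i) f i h) (\sum_(i <- r | P i) f' i).
Proof.
move=> Hf; elim: r => [|a r IH].
  rewrite big_nil; under eq_fun => h do rewrite big_nil; exact: sder_cst.
rewrite big_cons; under eq_fun => h do rewrite big_cons.
case: (boolP (P a)) => Pa //.
exact: sder_add (Hf a Pa) IH.
Qed.

Lemma sder_prod (I : Type) (r : seq I) (P : pred I) (f : I -> R -> R) :
  (forall i, P i -> derivable (f i) 0 1) ->
  derivable (fun h => \prod_(i <- r | P i) f i h) 0 1.
Proof.
move=> Hf; elim: r => [|a r IH].
  under eq_fun => h do rewrite big_nil; exact: derivable_cst.
under eq_fun => h do rewrite big_cons.
case: (boolP (P a)) => Pa //.
exact: (derivableM (Hf a Pa) IH).
Qed.


Definition mxder p r (M : R -> 'M[R]_(p, r)) (M' : 'M[R]_(p, r)) :=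
  forall i j, sder (fun h => M h i j) (M' i j).

Lemma mxder_cst p r (A : 'M[R]_(p, r)) : mxder (fun _ => A) 0.
Proof. by move=> i j; rewrite mxE; exact: sder_cst. Qed.

Lemma mxder_add p r (M N : R -> 'M[R]_(p, r)) M' N' :
  mxder M M' -> mxder N N' -> mxder (fun h => M h + N h) (M' + N').
Proof.
move=> HM HN i j; rewrite mxE; under eq_fun => h do rewrite mxE.
exact: sder_add.
Qed.

Lemma mxder_opp p r (M : R -> 'M[R]_(p, r)) M' :
  mxder M M' -> mxder (fun h => - M h) (- M').
Proof.
move=> HM i j; rewrite mxE; under eq_fun => h do rewrite mxE.
exact: sder_opp.
Qed.

Lemma mxder_sub p r (M N : R -> 'M[R]_(p, r)) M' N' :
  mxder M M' -> mxder N N' -> mxder (fun h => M h - N h) (M' - N').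
Proof. by move=> HM HN; apply: mxder_add => //; exact: mxder_opp. Qed.

Lemma mxder_mul p r s (M : R -> 'M[R]_(p, r)) (N : R -> 'M[R]_(r, s)) M' N' :
  mxder M M' -> mxder N N' ->
  mxder (fun h => M h *m N h) (M 0 *m N' + M' *m N 0).
Proof.
move=> HM HN i j; rewrite !mxE; under eq_fun => h do rewrite mxE.
rewrite -big_split /=; apply: sder_sum => k _.
exact: sder_mul.
Qed.

Lemma mxder_tr p r (M : R -> 'M[R]_(p, r)) M' :
  mxder M M' -> mxder (fun h => (M h)^T) M'^T.
Proof. by move=> HM i j; rewrite mxE; under eq_fun => h do rewrite mxE. Qed.

Lemma mxder_scalar p (s : R -> R) s' :
  sder s s' -> mxder (fun h => (s h)%:M : 'M[R]_p) s'%:M.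
Proof.
move=> Hs i j; rewrite !mxE; under eq_fun => h do rewrite mxE.
case: (i == j); rewrite /= ?mulr1n ?mulr0n //; exact: sder_cst.
Qed.

Lemma mxder_sel p r p' r' (M : R -> 'M[R]_(p, r)) M' (f : 'I_p' -> 'I_p) (g : 'I_r' -> 'I_r) :
  mxder M M' -> mxder (fun h => \matrix_(i, j) M h (f i) (g j)) (\matrix_(i, j) M' (f i) (g j)).
Proof. by move=> HM i j; rewrite mxE; under eq_fun => h do rewrite mxE. Qed.

Lemma mxder_derivable p r (M : R -> 'M[R]_(p, r)) M' i j :
  mxder M M' -> derivable (fun h => M h i j) 0 1.
Proof. by move=> HM; case: (HM i j). Qed.

Definition mxdvb p r (M : R -> 'M[R]_(p, r)) :=
  forall i j, derivable (fun h => M h i j) 0 1.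

Lemma sdvb_sum (I : Type) (r : seq I) (P : pred I) (f : I -> R -> R) :
  (forall i, P i -> derivable (f i) 0 1) ->
  derivable (fun h => \sum_(i <- r | P i) f i h) 0 1.
Proof.
move=> Hf; elim: r => [|a r IH].
  under eq_fun => h do rewrite big_nil; exact: derivable_cst.
under eq_fun => h do rewrite big_cons.
case: (boolP (P a)) => Pa //.
exact: (derivableD (Hf a Pa) IH).
Qed.

Lemma det_derivable p (M : R -> 'M[R]_p) :
  mxdvb M -> derivable (fun h => \det (M h)) 0 1.
Proof.
move=> HM; rewrite /determinant.
apply: sdvb_sum => s _.
apply: (derivableM (derivable_cst _ _ _)).
exact: sder_prod.
Qed.

Lemma adj_derivable p (M : R -> 'M[R]_p) i j :
  mxdvb M -> derivable (fun h => \adj (M h) i j) 0 1.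
Proof.
move=> HM; under eq_fun => h do rewrite mxE /cofactor.
apply: (derivableM (derivable_cst _ _ _)).
apply: det_derivable => a b.
under eq_fun => h do rewrite !mxE.
exact: HM.
Qed.

Lemma near_det_neq0 p (M : R -> 'M[R]_p) :
  mxdvb M -> M 0 \in unitmx -> \forall h \near (0:R), M h \in unitmx.
Proof.
move=> HM HU.
have Hd := det_derivable HM.
have Hc : ((fun h => \det (M h)) @ (0:R) --> \det (M 0))%classic.
  exact: (differentiable_continuous ((derivable1_diffP _ _).1 Hd)).
have Hne : \det (M 0) != 0 by rewrite -unitfE -unitmxE.
have H0 := cvgr_neq0 _ Hc Hne.
near=> h; rewrite unitmxE unitfE.
near: h; exact: H0.
Unshelve. all: by end_near.
Qed.

Lemma mxder_inv p (M : R -> 'M[R]_p) M' :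
  mxder M M' -> M 0 \in unitmx ->
  mxder (fun h => invmx (M h)) (- (invmx (M 0) *m M' *m invmx (M 0))).
Proof.
move=> HM HU.
have HMd : mxdvb M by move=> i j; exact: mxder_derivable HM.
have Hn := near_det_neq0 HMd HU.
have HPd : mxdvb (fun h => invmx (M h)).
  move=> i j.
  apply: (@near_eq_derivable _ _ _ (fun h => (\det (M h))^-1 * \adj (M h) i j)).
    near=> h; rewrite /invmx.
    have -> : M h \in unitmx by near: h. idtac.
    rewrite /=. rewrite [RHS]mxE. done.
  apply: derivableM; last exact: adj_derivable.
  apply: derivableV; last exact: det_derivable.
  by rewrite -unitfE -unitmxE.
pose P' := \matrix_(i, j) 'D_1 (fun h => invmx (M h) i j) 0.
have HP : mxder (fun h => invmx (M h)) P'.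
  by move=> i j; rewrite mxE; apply: derivableP; exact: HPd.
have HMP := mxder_mul HM HP.
have E : invmx (M 0) *m M 0 *m P' + invmx (M 0) *m M' *m invmx (M 0) = 0.
  rewrite -!mulmxA -mulmxDr.
  suff -> : M 0 *m P' + M' *m invmx (M 0) = 0 by rewrite mulmx0.
  apply/matrixP => i j; rewrite [RHS]mxE.
  case: (HMP i j) => _ <-.
  rewrite (@near_eq_derive _ _ _ _ (fun _ => (1%:M : 'M[R]_p) i j)).
    by rewrite derive_cst.
  near=> h; rewrite mulmxV //; near: h; exact: Hn.
have <- : P' = - (invmx (M 0) *m M' *m invmx (M 0)).
  apply/eqP; rewrite -subr_eq0 opprK.
  by move: E; rewrite mulVmx // mul1mx => ->.
exact: HP.
Unshelve. all: by end_near.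
Qed.

End Der.

Section Pos.
Variables (R : realType) (n m : nat) (N : 'I_n -> {set 'I_n}) (Z : 'M[R]_(n, m)).
Variables (s : R) (S : 'M[R]_m).
Hypotheses (HN : conditioning_sets N) (Hs : 0 < s) (HS : covariance_mx S).

Let K := Kmat Z S.
Let C := Cmat Z s S.

Lemma K_sym : K^T = K.
Proof. by rewrite /K /Kmat !trmx_mul trmxK mulmxA; case: HS => ->. Qed.

Lemma C_sym : C^T = C.
Proof. by rewrite /C /Cmat linearD /= K_sym tr_scalar_mx. Qed.

Lemma K_psd (x : 'cV[R]_n) : 0 <= (x^T *m K *m x) 0 0.
Proof.
case: HS => _ H; have := H (Z^T *m x).
by rewrite trmx_mul trmxK /K /Kmat !mulmxA.
Qed.

Definition sqn p (x : 'cV[R]_p) := (x^T *m x) 0 0.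

Lemma sqnE p (x : 'cV[R]_p) : sqn x = \sum_k x k 0 ^+ 2.
Proof. by rewrite /sqn mxE; apply: eq_bigr => k _; rewrite mxE expr2. Qed.

Lemma C_quad (x : 'cV[R]_n) : s * sqn x <= (x^T *m C *m x) 0 0.
Proof.
rewrite /C /Cmat mulmxDr mul_mx_scalar mulmxDl -scalemxAl mxE.
rewrite [X in _ <= _ + X]mxE.
by rewrite -[X in X <= _]add0r lerD2r K_psd.
Qed.

Definition Emb i : 'M[R]_(n, #|N i|) := colsub (@nb n N i) 1%:M.

Lemma EmbT i : (Emb i)^T = rowsub (@nb n N i) 1%:M.
Proof. by rewrite /Emb trmx_mxsub trmx1. Qed.

Lemma sub_nbE (M : 'M[R]_n) i : sub_nb N M i = (Emb i)^T *m M *m Emb i.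
Proof.
rewrite EmbT mul_rowsub_mx mul1mx /Emb mulmx_colsub mulmx1.
by apply/matrixP => a b; rewrite !mxE.
Qed.

Lemma row_nbE (M : 'M[R]_n) i : row_nb N M i = (delta_mx 0 i : 'rV_n) *m M *m Emb i.
Proof.
rewrite -rowE /Emb mulmx_colsub mulmx1.
by apply/matrixP => a b; rewrite !mxE.
Qed.

Lemma col_nbE (M : 'M[R]_n) i : col_nb N M i = (Emb i)^T *m M *m delta_mx i 0.
Proof.
rewrite EmbT !mul_rowsub_mx mul1mx -colE.
by apply/matrixP => a b; rewrite !mxE.
Qed.

Lemma EtE i : (Emb i)^T *m Emb i = 1%:M.
Proof.
rewrite EmbT mul_rowsub_mx mul1mx /Emb.
apply/matrixP => a b; rewrite !mxE.
by rewrite (inj_eq enum_val_inj).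
Qed.

Lemma nb_neq i (j : 'I_#|N i|) : (i == @nb n N i j) = false.
Proof.
apply/negbTE; apply/eqP => E.
have := HN (enum_valP j); rewrite -/(nb j) -E ltnn //.
Qed.

Lemma eE0 i : (delta_mx 0 i : 'rV_n) *m Emb i = 0.
Proof.
rewrite -rowE /Emb.
by apply/matrixP => a b; rewrite !mxE nb_neq.
Qed.

Lemma sqn_ge0 p (x : 'cV[R]_p) : 0 <= sqn x.
Proof. by rewrite sqnE; apply: sumr_ge0 => k _; exact: sqr_ge0. Qed.

Lemma sqn_Emb i (y : 'cV[R]_#|N i|) : sqn (Emb i *m y) = sqn y.
Proof. by rewrite /sqn trmx_mul mulmxA -(mulmxA y^T) EtE mulmx1. Qed.

Lemma CN_sym i : (sub_nb N C i)^T = sub_nb N C i.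
Proof. by rewrite sub_nbE !trmx_mul trmxK C_sym mulmxA. Qed.

Lemma CN_unit i : sub_nb N C i \in unitmx.
Proof.
rewrite -row_free_unit; apply: inj_row_free => v Hv.
have H2 := C_quad (Emb i *m v^T).
rewrite trmx_mul in H2.
have E1 : v^T^T *m (Emb i)^T *m C *m (Emb i *m v^T) = v *m sub_nb N C i *m v^T.
  by rewrite trmxK sub_nbE !mulmxA.
rewrite E1 in H2.
rewrite Hv mul0mx mxE sqn_Emb in H2.
have H3 : sqn v^T = 0.
  apply/eqP; rewrite eq_le sqn_ge0 andbT.
  by rewrite -(pmulr_rle0 _ Hs).
move: H3; rewrite sqnE => /psumr_eq0P H4.
have {}H4 := H4 (fun k _ => sqr_ge0 _).
apply/matrixP => a b; rewrite (ord1 a) mxE.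
have := H4 b isT; rewrite mxE.
by move/eqP; rewrite sqrf_eq0 => /eqP.
Qed.

Lemma D_quad i :
  let a := row_nb N K i in let b := col_nb N K i in
  let Ci := invmx (sub_nb N C i) in
  let v := delta_mx i 0 - Emb i *m (Ci *m b) in
  v^T *m C *m v = (delta_mx 0 i : 'rV_n) *m C *m delta_mx i 0 - a *m Ci *m b.
Proof.
move=> a b Ci v.
have Ee : (Emb i)^T *m (delta_mx i 0 : 'cV_n) = 0.
  by rewrite -trmx_delta -trmx_mul eE0 trmx0.
have ea : (delta_mx 0 i : 'rV_n) *m C *m Emb i = a.
  by rewrite /C /Cmat mulmxDr mul_mx_scalar mulmxDl -scalemxAl eE0 scaler0 addr0 /a row_nbE.
have eb : (Emb i)^T *m C *m delta_mx i 0 = b.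
  by rewrite /C /Cmat mulmxDr mul_mx_scalar mulmxDl -scalemxAl Ee scaler0 addr0 /b col_nbE.
have ab : a^T = b.
  rewrite /a /b row_nbE col_nbE trmx_mul [(_ *m K)^T]trmx_mul K_sym trmx_delta; exact: mulmxA.
have Cis : Ci^T = Ci by rewrite /Ci trmx_inv CN_sym.
have CiC : Ci *m sub_nb N C i = 1%:M by rewrite /Ci mulVmx // CN_unit.
have vt : v^T = delta_mx 0 i - b^T *m Ci *m (Emb i)^T.
  by rewrite /v linearB /= trmx_delta !trmx_mul Cis.
rewrite vt /v mulmxBl mulmxBr !mulmxBl.
have T2 : (delta_mx 0 i : 'rV_n) *m C *m (Emb i *m (Ci *m b)) = a *m Ci *m b.
  by rewrite !mulmxA ea.
have T3 : b^T *m Ci *m (Emb i)^T *m C *m delta_mx i 0 = a *m Ci *m b.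
  by rewrite -!mulmxA (mulmxA (Emb i)^T) eb -ab trmxK !mulmxA.
have T4 : b^T *m Ci *m (Emb i)^T *m C *m (Emb i *m (Ci *m b)) = a *m Ci *m b.
  rewrite !mulmxA -(mulmxA _ (Emb i)^T) -(mulmxA _ ((Emb i)^T *m C)) -sub_nbE.
  by rewrite -(mulmxA b^T Ci) CiC mulmx1 -ab trmxK.
rewrite T2 T3 T4.
by rewrite subrr subr0.
Qed.

Lemma delta_quad (M : 'M[R]_n) i :
  ((delta_mx 0 i : 'rV_n) *m M *m (delta_mx i 0 : 'cV_n)) 0 0 = M i i.
Proof. by rewrite -rowE -colE !mxE. Qed.

Lemma D_pos i : 0 < Dval N Z s S i.
Proof.
set v : 'cV_n := delta_mx i 0 - Emb i *m (invmx (sub_nb N C i) *m col_nb N K i).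
have E : Dval N Z s S i = (v^T *m C *m v) 0 0.
  rewrite D_quad /Dval /Avec -/C -/K [in RHS]mxE delta_quad.
  by rewrite [X in _ = _ + X]mxE.
rewrite E; apply: (lt_le_trans _ (C_quad v)).
apply: mulr_gt0 => //.
have vi : v i 0 = 1.
  rewrite /v !mxE !eqxx /= big1 ?subr0 // => j _.
  by rewrite !mxE nb_neq mul0r.
apply: (lt_le_trans _ (_ : v i 0 ^+ 2 <= sqn v)).
  by rewrite vi expr1n ltr01.
rewrite sqnE (bigD1 i) //= lerDl.
by apply: sumr_ge0 => k _; exact: sqr_ge0.
Qed.

End Pos.

Lemma sder_ln (R : realType) (f : R -> R) df :
  is_derive (0:R) (1:R) f df -> 0 < f 0 ->
  is_derive (0:R) (1:R) (fun h => ln (f h)) ((f 0)^-1 * df).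
Proof.
case=> Hf Hdf Hpos.
have Hl := is_derive1_ln Hpos.
have Hld : derivable (@ln R) (f 0) 1 by case: Hl.
have dc : differentiable (@ln R \o f) 0.
  apply: differentiable_comp; first exact/derivable1_diffP.
  exact/derivable1_diffP.
apply: DeriveDef; first exact/derivable1_diffP.
have := derive1_comp Hf Hld; rewrite !derive1E => /= ->.
by rewrite Hdf derive_val.
Qed.

Lemma quad_alg (R : realType) p (r : 'cV[R]_p) (B dB W dDm : 'M[R]_p) : W^T = W ->
  let u := W *m B *m r in let uk := dB *m r in
  (r^T *m B^T *m W *m dB *m r + r^T *m B^T *m (- (W *m dDm *m W)) *m B *m r
    + r^T *m dB^T *m W *m B *m r) 0 0
  = 2 * (uk^T *m u) 0 0 - (u^T *m dDm *m u) 0 0.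
Proof.
move=> WT u uk.
have X1 : (uk^T *m u) 0 0 = (r^T *m dB^T *m W *m B *m r) 0 0.
  by rewrite /u /uk trmx_mul !mulmxA.
have X2 : (r^T *m B^T *m W *m dB *m r) 0 0 = (uk^T *m u) 0 0.
  have T : forall M : 'M[R]_1, M 0 0 = M^T 0 0 by move=> M; rewrite mxE.
  by rewrite T /u /uk !trmx_mul !trmxK WT !mulmxA.
have X3 : (u^T *m dDm *m u) 0 0 = (r^T *m B^T *m (W *m dDm *m W) *m B *m r) 0 0.
  by rewrite /u !trmx_mul WT !mulmxA.
have EA : forall A1 A2 : 'M[R]_1, (A1 + A2) 0 0 = A1 0 0 + A2 0 0 by move=> A1 A2; rewrite mxE.
have EN : forall A : 'M[R]_1, (- A) 0 0 = - A 0 0 by move=> A; rewrite mxE.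
rewrite mulmxN !mulNmx !EA EN.
by rewrite X2 -X3 -X1 mulr_natl mulr2n addrAC.
Qed.

Section Gen.
Variables (R : realType) (n m : nat) (N : 'I_n -> {set 'I_n}) (Z : 'M[R]_(n, m)).
Variables (y F : 'cV[R]_n).
Variables (s : R -> R) (s' : R) (S : R -> 'M[R]_m) (S' : 'M[R]_m).
Hypotheses (HN : conditioning_sets N) (Hs0 : 0 < s 0) (HS0 : covariance_mx (S 0)).
Hypotheses (Hs : is_derive (0:R) (1:R) s s') (HS : mxder S S').

Lemma mxder_eq p r (M : R -> 'M[R]_(p, r)) M' M'' : mxder M M' -> M' = M'' -> mxder M M''.
Proof. by move=> ? <-. Qed.

Lemma dK : mxder (fun h => Kmat Z (S h)) (Kmat Z S').
Proof.
apply: mxder_eq; first exact: mxder_mul (mxder_mul (mxder_cst Z) HS) (mxder_cst Z^T).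
by rewrite /= mulmx0 add0r mul0mx addr0.
Qed.

Lemma dC : mxder (fun h => Cmat Z (s h) (S h)) (Cmat Z s' S').
Proof. exact: mxder_add dK (mxder_scalar Hs). Qed.

Lemma dRow (M : R -> 'M[R]_n) M' i : mxder M M' -> mxder (fun h => row_nb N (M h) i) (row_nb N M' i).
Proof. by move=> HM a b; rewrite mxE; under eq_fun => h do rewrite mxE. Qed.

Lemma dCol (M : R -> 'M[R]_n) M' i : mxder M M' -> mxder (fun h => col_nb N (M h) i) (col_nb N M' i).
Proof. by move=> HM a b; rewrite mxE; under eq_fun => h do rewrite mxE. Qed.

Lemma dSub (M : R -> 'M[R]_n) M' i : mxder M M' -> mxder (fun h => sub_nb N (M h) i) (sub_nb N M' i).
Proof. by move=> HM a b; rewrite mxE; under eq_fun => h do rewrite mxE. Qed.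

Definition Ci i := invmx (sub_nb N (Cmat Z (s 0) (S 0)) i).

Definition dA i : 'rV[R]_#|N i| :=
  row_nb N (Kmat Z S') i *m Ci i
  - row_nb N (Kmat Z (S 0)) i *m Ci i *m sub_nb N (Cmat Z s' S') i *m Ci i.

Lemma dAv i : mxder (fun h => Avec N Z (s h) (S h) i) (dA i).
Proof.
have U : sub_nb N (Cmat Z (s 0) (S 0)) i \in unitmx by apply: CN_unit.
have H := mxder_mul (dRow (i:=i) dK) (mxder_inv (dSub (i:=i) dC) U).
apply: (mxder_eq H).
by rewrite /= /dA mulmxN !mulmxA addrC.
Qed.

Definition dD i : R :=
  Cmat Z s' S' i i - (dA i *m col_nb N (Kmat Z (S 0)) i) 0 0
  - (Avec N Z (s 0) (S 0) i *m col_nb N (Kmat Z S') i) 0 0.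

Lemma dDv i : is_derive (0:R) (1:R) (fun h => Dval N Z (s h) (S h) i) (dD i).
Proof.
rewrite /Dval.
have H := sder_sub (dC i i) (mxder_mul (dAv (i:=i)) (dCol (i:=i) dK) 0 0).
apply: (is_derive_eq H).
by rewrite /dD /= mxE [(Avec _ _ _ _ _ *m _ + _) 0 0]mxE opprD addrA addrAC.
Qed.

Lemma dDvec : mxder (fun h => Dvec N Z (s h) (S h)) (diag_mx (\row_i dD i)).
Proof.
move=> a b; rewrite /Dvec !mxE; under eq_fun => h do rewrite !mxE.
case: (a == b); rewrite ?mulr1n ?mulr0n; first exact: dDv.
exact: sder_cst.
Qed.

Lemma dBvec : mxder (fun h => Bvec N Z (s h) (S h)) (blockmat (fun i => - dA i)).
Proof.
move=> r c; rewrite /Bvec /Bmat /blockmat mxE; under eq_fun => h do rewrite mxE.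
have H := sder_sub (sder_cst ((r == c)%:R))
  (sder_sum (index_enum 'I_#|N r|) (fun j _ => sder_mul (sder_cst ((@nb n N r j == c)%:R)) (dAv (i:=r) 0 j))).
apply: (is_derive_eq (H predT)).
rewrite sub0r -sumrN; apply: eq_bigr => j _.
by rewrite mul0r addr0 [(- dA r) 0 j]mxE mulrN.
Qed.

Lemma Dvec_unit : Dvec N Z (s 0) (S 0) \in unitmx.
Proof.
rewrite unitmxE det_diag unitfE; apply/lt0r_neq0/prodr_gt0 => i _.
by rewrite mxE; apply: D_pos.
Qed.

Lemma gen_deriv :
  is_derive (0:R) (1:R) (fun h => Ltilde N Z y F (s h) (S h))
    (grad_rhs N Z y F (s 0) (S 0) (blockmat (fun i => - dA i)) dD).
Proof.
rewrite /Ltilde.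
have HW := mxder_inv dDvec Dvec_unit.
have H1 := mxder_mul (mxder_cst (y - F)^T) (mxder_tr dBvec).
have H2 := mxder_mul H1 HW.
have H3 := mxder_mul H2 dBvec.
have H4 := mxder_mul H3 (mxder_cst (y - F)).
have Q := sder_mul (sder_cst 2^-1) (H4 0 0).
have Hln : is_derive (0:R) (1:R) (fun h => \sum_i ln (Dval N Z (s h) (S h) i))
   (\sum_i (Dval N Z (s 0) (S 0) i)^-1 * dD i).
  apply: (sder_sum (index_enum 'I_n) (P := predT)) => i _.
  apply: sder_ln; first exact: dDv.
  exact: D_pos.
have L2 := sder_mul (sder_cst 2^-1) Hln.
have T := sder_add (sder_add Q L2) (sder_cst (n%:R / 2 * ln (2 * pi))).
apply: (is_derive_eq T).
rewrite /grad_rhs /= !mul0r !addr0.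
have WT : (invmx (Dvec N Z (s 0) (S 0)))^T = invmx (Dvec N Z (s 0) (S 0)).
  by rewrite trmx_inv /Dvec tr_diag_mx.
rewrite mulmx0 add0r mul0mx addr0 !mulmxDl addrA (@quad_alg _ _ _ _ _ _ _ WT).
by [].
Qed.

End Gen.

Unset Implicit Arguments. Set Strict Implicit. Set Printing Implicit Defensive.

Lemma derive_line (R : realType) (V W : normedModType R) (f : V -> W) a v :
  'D_v f a = 'D_1 (fun h : R => f (h *: v + a)) 0.
Proof.
rewrite /derive; set g1 := fun h => h^-1 *: _; set g2 := fun h => h^-1 *: _.
suff -> : g1 = g2 by [].
by rewrite funeqE /g1 /g2 => h /=; rewrite addr0 scale0r add0r [_%:A]mulr1.
Qed.

Lemma blockmat_ext (R : realType) n (N : 'I_n -> {set 'I_n}) (b1 b2 : forall i, 'rV[R]_#|N i|) :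
  (forall i, b1 i = b2 i) -> blockmat b1 = blockmat b2.
Proof.
move=> H; apply/matrixP => r c; rewrite !mxE; apply: eq_bigr => j _.
by rewrite H.
Qed.

Lemma row_nb0 (R : realType) n (N : 'I_n -> {set 'I_n}) i : row_nb N (0 : 'M[R]_n) i = 0.
Proof. by apply/matrixP => a b; rewrite !mxE. Qed.

Lemma col_nb0 (R : realType) n (N : 'I_n -> {set 'I_n}) i : col_nb N (0 : 'M[R]_n) i = 0.
Proof. by apply/matrixP => a b; rewrite !mxE. Qed.

Lemma sub_nb1 (R : realType) n (N : 'I_n -> {set 'I_n}) i : sub_nb N (1%:M : 'M[R]_n) i = 1%:M.
Proof. by apply/matrixP => a b; rewrite !mxE (inj_eq enum_val_inj). Qed.

Lemma Kmat0 (R : realType) n m (Z : 'M[R]_(n, m)) : Kmat Z 0 = 0.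
Proof. by rewrite /Kmat mulmx0 mul0mx. Qed.

Lemma mx00 (R : realType) p r (a : 'I_p) (b : 'I_r) : (0 : 'M[R]_(p, r)) a b = 0.
Proof. by rewrite mxE. Qed.

Lemma mx1E (R : realType) p (a : 'I_p) : (1%:M : 'M[R]_p) a a = 1.
Proof. by rewrite mxE eqxx mulr1n. Qed.

Lemma scal0 (R : realType) p : (0%:M : 'M[R]_p) = 0.
Proof. by apply/matrixP => a b; rewrite !mxE mul0rn. Qed.

Theorem proposition1 (R : realType) (n m q : nat)
  (N : 'I_n -> {set 'I_n}) (Z : 'M[R]_(n, m)) (y F : 'cV[R]_n)
  (Sigma : 'rV[R]_q -> 'M[R]_m) (theta : 'rV[R]_q.+1) :
  conditioning_sets N ->
  0 < theta 0 0 ->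
  let th' := \row_j theta 0 (lift ord0 j) in
  covariance_mx (Sigma th') ->
  differentiable Sigma th' ->
  let L := fun th : 'rV[R]_q.+1 =>
    Ltilde N Z y F (th 0 0) (Sigma (\row_j th 0 (lift ord0 j))) in
  let s2 := theta 0 0 in
  let S := Sigma th' in
  (derivable L theta (delta_mx 0 ord0) /\
   'D_(delta_mx 0 ord0) L theta =
     grad_rhs N Z y F s2 S (blockmat (dBrow_s2 N Z s2 S)) (dDval_s2 N Z s2 S))
  /\
  (forall k : 'I_q,
     let dS := 'D_(delta_mx 0 k) Sigma th' in
     derivable L theta (delta_mx 0 (lift ord0 k)) /\
     'D_(delta_mx 0 (lift ord0 k)) L theta =
       grad_rhs N Z y F s2 S (blockmat (fun i => - dAvec N Z s2 S dS i))
         (dDval N Z s2 S dS)).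
Proof.
move=> HN Hpos th' Hcov Hdiff L s2 S.
split.
- set v : 'rV[R]_q.+1 := delta_mx 0 ord0.
  have Eg : (fun h : R => L (h *: v + theta)) = (fun h => Ltilde N Z y F (h + s2) S).
    apply/funext => h.
    have E1 : (h *: v + theta) 0 0 = h + s2 by rewrite !mxE /= mulr1.
    have E2 : \row_j (h *: v + theta) 0 (lift ord0 j) = th'.
      by apply/matrixP => a b; rewrite !mxE /= mulr0 add0r.
    by rewrite /L E1 E2.
  have Hs : is_derive (0:R) (1:R) (fun h : R => h + s2) 1.
    have Hid : is_derive (0:R) (1:R) (fun h : R => h) 1 by apply: is_derive_id.
    have H := sder_add Hid (sder_cst s2).
    by rewrite addr0 in H.
  have T := gen_deriv Z y F HN (s := fun h => h + s2) (S := fun _ => S) (s' := 1) (S' := 0).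
  have Hp : 0 < (fun h : R => h + s2) 0 by rewrite /= add0r.
  have := T Hp Hcov Hs (mxder_cst S).
  rewrite /= add0r => {}T.
  split; first by apply/derivable1P; rewrite Eg; case: T.
  rewrite derive_line Eg; case: T => _ ->.
  have EB : blockmat (fun i => - dA N Z (fun h : R => h + s2) 1 (fun _ => S) 0 i)
            = blockmat (dBrow_s2 N Z s2 S).
    apply: blockmat_ext => i.
    rewrite /dA /dBrow_s2 Kmat0 row_nb0 mul0mx sub0r opprK /Cmat Kmat0 add0r sub_nb1.
    by rewrite mulmx1 /Ci /= add0r expr2 -mulmxE mulmxA.
  have ED : dD N Z (fun h : R => h + s2) 1 (fun _ => S) 0 = dDval_s2 N Z s2 S.
    apply/funext => i.
    rewrite /dD /dDval_s2 /dAvec_s2 /dBrow_s2 /dA /Cmat Kmat0 col_nb0 mulmx0 mx00 subr0 add0r mx1E.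
    rewrite sub_nb1 row_nb0 mul0mx sub0r mulmx1 /Ci /= add0r expr2 -mulmxE mulmxA.
    by [].
  by rewrite EB ED.
move=> k dS.
set v : 'rV[R]_q.+1 := delta_mx 0 (lift ord0 k).
set e : 'rV[R]_q := delta_mx 0 k.
have Eg : (fun h : R => L (h *: v + theta)) =
          (fun h => Ltilde N Z y F s2 (Sigma (h *: e + th'))).
  apply/funext => h.
  have E1 : (h *: v + theta) 0 0 = s2.
    by rewrite !mxE eqxx /= mulr0 add0r.
  have E2 : \row_j (h *: v + theta) 0 (lift ord0 j) = h *: e + th'.
    by apply/matrixP => a b; rewrite !mxE /= (inj_eq (@lift_inj _ ord0)) (ord1 a).
  by rewrite /L E1 E2.
have HS : mxder (fun h : R => Sigma (h *: e + th')) dS.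
  have Hd : derivable Sigma th' e by apply: diff_derivable.
  have Hd1 := (derivable1P _ _ _).1 Hd.
  have EdS : dS = 'D_1 (fun h : R => Sigma (h *: e + th')) 0 by apply: derive_line.
  move=> a b; rewrite EdS (derive_mx Hd1) mxE.
  apply: DeriveDef => //.
  exact: (derivable_mxP _ _ _).1 Hd1 a b.
have Hs : is_derive (0:R) (1:R) (fun _ : R => s2) 0 by apply: sder_cst.
have Hcov' : covariance_mx ((fun h : R => Sigma (h *: e + th')) 0).
  by rewrite /= scale0r add0r.
have T := gen_deriv Z y F HN (s := fun _ : R => s2) Hpos Hcov' Hs HS.
split; first by apply/derivable1P; rewrite Eg; case: T.
rewrite derive_line Eg; case: T => _ ->.
have E0 : Sigma (0 *: e + th') = S by rewrite scale0r add0r.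
have EB : blockmat (fun i => - dA N Z (fun=> s2) 0 (fun h : R => Sigma (h *: e + th')) dS i)
        = blockmat (fun i => - dAvec N Z s2 S dS i).
  apply: blockmat_ext => i.
  by rewrite /dA /dAvec /Ci /= E0 /Cmat scal0 addr0.
have ED : dD N Z (fun=> s2) 0 (fun h : R => Sigma (h *: e + th')) dS = dDval N Z s2 S dS.
  apply/funext => i.
  rewrite /dD /dDval /dA /dAvec /Ci /= E0.
  by rewrite [Cmat Z 0 dS]/Cmat scal0 addr0.
by rewrite E0 EB ED.
Qed.
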